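(* Let $\beta>0$ and $k<0$ (so in particular $k<0<\frac{3}{3+\beta}$). Let \[f_{++}(x,y,z)=\beta(x^2y^2+y^2z^2+x^2z^2)+\Big(x^2+y^2+z^2+\tfrac12\Big)^2-\tfrac{1-k}{4}.\] Then the zero set $Q^{++}(k)=\{(x,y,z)\in\mathbb{R}^3: f_{++}(x,y,z)=0\}$ is a connected compact surface homeomorphic to a sphere.
   Context: $Q^{++}(k)$ is an octahedral quartic, i.e. $f_{++}$ is invariant under the group of $3\times 3$ signed permutation matrices. *)

(* Defs.v *)
From HB Require Import structures.
From mathcomp Require Import all_boot all_order all_algebra.
From mathcomp Require Import all_classical all_reals all_analysis.
Set Implicit Arguments. Unset Strict Implicit. Unset Printing Implicit Defensive.
Import Order.TTheory GRing.Theory Num.Theory.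
Import numFieldNormedType.Exports.
Local Open Scope ring_scope.
Local Open Scope classical_set_scope.

Notation pt3 R := (R * R * R)%type.

Definition fpp (R : realType) (beta k : R) (p : pt3 R) : R :=
  let x := p.1.1 in let y := p.1.2 in let z := p.2 in
  beta * (x ^+ 2 * y ^+ 2 + y ^+ 2 * z ^+ 2 + x ^+ 2 * z ^+ 2)
  + (x ^+ 2 + y ^+ 2 + z ^+ 2 + 2^-1) ^+ 2 - (1 - k) / 4.

Definition Qpp (R : realType) (beta k : R) : set (pt3 R) :=
  [set p | fpp beta k p = 0].

Definition sphere2 (R : realType) : set (pt3 R) :=
  [set p | p.1.1 ^+ 2 + p.1.2 ^+ 2 + p.2 ^+ 2 = 1].

Definition homeomorphic_sets (T U : topologicalType) (A : set T) (B : set U) : Prop :=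
  exists (f : T -> U) (g : U -> T),
    (forall a, A a -> B (f a)) /\
    (forall b, B b -> A (g b)) /\
    (forall a, A a -> g (f a) = a) /\
    (forall b, B b -> f (g b) = b) /\
    {within A, continuous f} /\
    {within B, continuous g}.

(* Main.v *)
Require Import Defs.
From HB Require Import structures.
From mathcomp Require Import all_boot all_order all_algebra.
From mathcomp Require Import all_classical all_reals all_analysis.
From mathcomp Require Import ring lra.
Import Order.TTheory GRing.Theory Num.Theory.
Import numFieldNormedType.Exports.
Local Open Scope ring_scope.
Local Open Scope classical_set_scope.
Set Implicit Arguments. Unset Strict Implicit.

Section Ct.
Variables (R : realType) (T : topologicalType) (x : T).
Implicit Types f g : T -> R.
Lemma ctD f g : {for x, continuous f} -> {for x, continuous g} ->
  {for x, continuous (fun y => f y + g y)}.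
Proof. move=> cf cg; exact: cvgD. Qed.
Lemma ctM f g : {for x, continuous f} -> {for x, continuous g} ->
  {for x, continuous (fun y => f y * g y)}.
Proof. move=> cf cg; exact: cvgM. Qed.
Lemma ctN f : {for x, continuous f} -> {for x, continuous (fun y => - f y)}.
Proof. move=> cf; exact: cvgN. Qed.
Lemma ctV f : f x != 0 -> {for x, continuous f} -> {for x, continuous (fun y => (f y)^-1)}.
Proof. move=> h cf; exact: cvgV. Qed.
Lemma ctC (c : R) : {for x, continuous (fun _ : T => c)}.
Proof. exact: cvg_cst. Qed.
Lemma ctS f : {for x, continuous f} -> {for x, continuous (fun y => Num.sqrt (f y))}.
Proof. move=> cf; exact: (continuous_comp cf (@sqrt_continuous R (f x))). Qed.
Lemma ctP (f g h : T -> R) : {for x, continuous f} -> {for x, continuous g} -> {for x, continuous h} ->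
  {for x, continuous (fun y => ((f y, g y), h y) : pt3 R)}.
Proof.
move=> cf cg ch.
have H1 : (fun y => (f y, g y)) @ x --> (f x, g x).
  exact: (@cvg_pair _ _ _ _ (nbhs (f x)) (nbhs (g x)) _ _ _ f g cf cg).
exact: (@cvg_pair _ _ _ _ (nbhs (f x, g x)) (nbhs (h x)) _ _ _ _ h H1 ch).
Qed.
End Ct.

Section Pr.
Variables (R : realType) (p : pt3 R).
Lemma ct1 : {for p, continuous (fun q : pt3 R => q.1.1)}.
Proof. apply: continuous_comp; [exact: cvg_fst| exact: cvg_fst]. Qed.
Lemma ct2 : {for p, continuous (fun q : pt3 R => q.1.2)}.
Proof. apply: continuous_comp; [exact: cvg_fst| exact: cvg_snd]. Qed.
Lemma ct3 : {for p, continuous (fun q : pt3 R => q.2)}.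
Proof. exact: cvg_snd. Qed.
End Pr.

Section Alg.
Variables (R : realType) (beta k : R).
Hypotheses (hb : 0 < beta) (hk : k < 0).

Definition n2 (p : pt3 R) := p.1.1 ^+ 2 + p.1.2 ^+ 2 + p.2 ^+ 2.
Definition s4 (p : pt3 R) := p.1.1 ^+ 2 * p.1.2 ^+ 2 + p.1.2 ^+ 2 * p.2 ^+ 2 + p.1.1 ^+ 2 * p.2 ^+ 2.
Definition AA p := beta * s4 p + n2 p ^+ 2.
Definition DD p := n2 p ^+ 2 - AA p * k.
Definition ww p := (- n2 p + Num.sqrt (DD p)) / (2 * AA p).
Definition sc (c : R) (p : pt3 R) : pt3 R := ((c * p.1.1, c * p.1.2), c * p.2).
Definition HH p := sc (Num.sqrt (ww p)) p.

Lemma n2_ge0 p : 0 <= n2 p.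
Proof. rewrite /n2; apply: addr_ge0; [apply: addr_ge0|]; exact: sqr_ge0. Qed.
Lemma s4_ge0 p : 0 <= s4 p.
Proof. rewrite /s4; apply: addr_ge0; [apply: addr_ge0|]; apply: mulr_ge0; exact: sqr_ge0. Qed.

Lemma fpp_sc c p : fpp beta k (sc c p) =
  AA p * (c ^+ 2) ^+ 2 + n2 p * c ^+ 2 + k / 4.
Proof. rewrite /fpp /AA /n2 /s4 /sc /=. by field; rewrite ?pnatr_eq0. Qed.

Lemma n2_sc c p : n2 (sc c p) = c ^+ 2 * n2 p.
Proof. rewrite /n2 /sc /=; ring. Qed.
Lemma s4_sc c p : s4 (sc c p) = (c ^+ 2) ^+ 2 * s4 p.
Proof. rewrite /s4 /sc /=; ring. Qed.

Lemma AA_gt0 p : 0 < n2 p -> 0 < AA p.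
Proof.
move=> h; rewrite /AA; apply: ltr_wpDl; first by apply: mulr_ge0; [exact: ltW|exact: s4_ge0].
exact: exprn_gt0.
Qed.

Lemma ww_gt0 p : 0 < n2 p -> 0 < ww p.
Proof.
move=> h; have hA := AA_gt0 h.
rewrite /ww; apply: divr_gt0; last by rewrite mulr_gt0.
rewrite addrC subr_gt0.
have -> : n2 p = Num.sqrt (n2 p ^+ 2) by rewrite sqrtr_sqr ger0_norm // ltW.
have hD : n2 p ^+ 2 < DD p by rewrite /DD ltrDl -mulrN; apply: mulr_gt0 => //; rewrite oppr_gt0.
rewrite ltr_sqrt //; apply: lt_trans hD; exact: exprn_gt0.
Qed.

Lemma HH_Q p : 0 < n2 p -> Qpp beta k (HH p).
Proof.
move=> h; have hA := AA_gt0 h; have hw := ww_gt0 h.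
rewrite /Qpp /= /HH fpp_sc sqr_sqrtr ?ltW //.
have hD : 0 <= DD p.
  rewrite /DD -mulrN; apply: addr_ge0; first exact: sqr_ge0.
  apply: mulr_ge0; [exact: ltW| by rewrite oppr_ge0 ltW].
have hs := sqr_sqrtr hD.
have e : 2 * AA p * ww p + n2 p = Num.sqrt (DD p).
  rewrite /ww; field; by rewrite gt_eqF.
have : (2 * AA p * ww p + n2 p) ^+ 2 = DD p by rewrite e.
rewrite /DD => e2.
have : 4 * AA p * (AA p * ww p ^+ 2 + n2 p * ww p + k / 4) = 0.
  have -> : 4 * AA p * (AA p * ww p ^+ 2 + n2 p * ww p + k / 4) =
    (2 * AA p * ww p + n2 p) ^+ 2 - (n2 p ^+ 2 - AA p * k) by field; rewrite ?pnatr_eq0.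
  by rewrite e2 subrr.
move/eqP; rewrite mulf_eq0 mulf_eq0 (gt_eqF hA) /= => /orP[|/eqP //].
by rewrite pnatr_eq0.
Qed.

Lemma sc1 p : sc 1 p = p.
Proof. by case: p => [[x y] z]; rewrite /sc /= !mul1r. Qed.

Lemma fpp_AA p : fpp beta k p = AA p + n2 p + k / 4.
Proof. by rewrite -{1}(sc1 p) fpp_sc expr1n expr1n mulr1 mulr1. Qed.

Lemma s4_le p : s4 p <= n2 p ^+ 2.
Proof.
rewrite -subr_ge0.
have -> : n2 p ^+ 2 - s4 p = (p.1.1 ^+ 2) ^+ 2 + (p.1.2 ^+ 2) ^+ 2 + (p.2 ^+ 2) ^+ 2 + s4 p
  by rewrite /n2 /s4; ring.
apply: addr_ge0; last exact: s4_ge0.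
by apply: addr_ge0; [apply: addr_ge0|]; exact: sqr_ge0.
Qed.

Lemma Q_n2 p : Qpp beta k p -> 0 < n2 p.
Proof.
move=> hQ; rewrite lt0r n2_ge0 andbT; apply/negP => /eqP h0.
have hs := s4_le p; rewrite h0 expr0n /= in hs.
have hs0 : s4 p = 0 by apply/le_anti; rewrite hs s4_ge0.
move: hQ; rewrite /Qpp /= fpp_AA /AA h0 hs0 expr0n /= mulr0 !add0r => /eqP.
by rewrite mulf_eq0 invr_eq0 pnatr_eq0 orbF (lt_eqF hk).
Qed.

Lemma ww_Q p : Qpp beta k p -> ww p = 1.
Proof.
move=> hQ; have hn := Q_n2 hQ; have hA := AA_gt0 hn.
move: hQ; rewrite /Qpp /= fpp_AA => e.
have ek : k = - 4 * (AA p + n2 p).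
  have e3 : k / 4 = - (AA p + n2 p).
    by apply/eqP; rewrite -subr_eq0 opprK addrC e.
  have -> : k = 4 * (k / 4) by field; rewrite ?pnatr_eq0.
  by rewrite e3 mulrN mulNr.
rewrite /ww.
have -> : DD p = (2 * AA p + n2 p) ^+ 2 by rewrite /DD ek; ring.
rewrite sqrtr_sqr ger0_norm; last first.
  by apply: addr_ge0; [apply: mulr_ge0 => //; exact: ltW| exact: ltW].
by field; rewrite gt_eqF.
Qed.

Lemma HH_fix p : Qpp beta k p -> HH p = p.
Proof. by move=> hQ; rewrite /HH ww_Q // sqrtr1 sc1. Qed.

Lemma HH_sc c p : 0 < c -> 0 < n2 p -> HH (sc c p) = HH p.
Proof.
move=> hc hn; have hA := AA_gt0 hn.
have eA : AA (sc c p) = (c ^+ 2) ^+ 2 * AA p by rewrite /AA s4_sc n2_sc; ring.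
have eD : DD (sc c p) = (c ^+ 2) ^+ 2 * DD p by rewrite /DD eA n2_sc; ring.
have ew : ww (sc c p) = ww p * (c^-1) ^+ 2.
  rewrite /ww eA eD n2_sc sqrtrM; last by apply: exprn_ge0; apply: exprn_ge0; exact: ltW.
  rewrite sqrtr_sqr ger0_norm; last by apply: exprn_ge0; exact: ltW.
  by field; rewrite (gt_eqF hA) (gt_eqF hc).
rewrite /HH ew sqrtrM; last exact: ltW (ww_gt0 hn).
rewrite sqrtr_sqr ger0_norm; last by rewrite invr_ge0 ltW.
case: p hn {eA eD ew hA} => [[x y] z] hn; rewrite /sc /=.
by congr (_, _, _); field; rewrite gt_eqF.
Qed.

Lemma fpp_neg p : fpp beta k (sc (-1) p) = fpp beta k p.
Proof. by rewrite fpp_sc sqrrN expr1n expr1n !mulr1 fpp_AA. Qed.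


Lemma ctX2 (T : topologicalType) (x : T) (f : T -> R) : {for x, continuous f} ->
  {for x, continuous (fun y => f y ^+ 2)}.
Proof.
move=> cf; have -> : (fun y => f y ^+ 2) = (fun y => f y * f y).
  by apply: funext => y; rewrite expr2.
exact: ctM.
Qed.

Lemma ct_n2 p : {for p, continuous n2}.
Proof. rewrite /n2; apply: ctD; [apply: ctD|]; apply: ctX2; [exact: ct1|exact: ct2|exact: ct3]. Qed.

Lemma ct_s4 p : {for p, continuous s4}.
Proof.
rewrite /s4; apply: ctD; [apply: ctD|]; apply: ctM; apply: ctX2;
  (exact: ct1 || exact: ct2 || exact: ct3).
Qed.

Lemma ct_AA p : {for p, continuous AA}.
Proof. rewrite /AA; apply: ctD; [apply: ctM; [exact: ctC|exact: ct_s4]| apply: ctX2; exact: ct_n2]. Qed.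

Lemma ct_DD p : {for p, continuous DD}.
Proof. rewrite /DD; apply: ctD; [apply: ctX2; exact: ct_n2| apply: ctN; apply: ctM; [exact: ct_AA|exact: ctC]]. Qed.

Lemma ct_ww p : 0 < n2 p -> {for p, continuous ww}.
Proof.
move=> hn; rewrite /ww; apply: ctM.
  apply: ctD; [apply: ctN; exact: ct_n2| apply: ctS; exact: ct_DD].
apply: ctV; first by rewrite mulf_neq0 // ?pnatr_eq0 // gt_eqF // AA_gt0.
apply: ctM; [exact: ctC|exact: ct_AA].
Qed.

Lemma ct_sc (T : topologicalType) (x : T) (c : T -> R) (f : T -> pt3 R) :
  {for x, continuous c} -> {for x, continuous f} ->
  {for x, continuous (fun y => sc (c y) (f y))}.
Proof.
move=> cc cf.
have h1 : {for x, continuous (fun y => (f y).1.1)} := continuous_comp cf (@ct1 R (f x)).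
have h2 : {for x, continuous (fun y => (f y).1.2)} := continuous_comp cf (@ct2 R (f x)).
have h3 : {for x, continuous (fun y => (f y).2)} := continuous_comp cf (@ct3 R (f x)).
rewrite /sc; apply: ctP; apply: ctM => //.
Qed.

Lemma ct_HH p : 0 < n2 p -> {for p, continuous HH}.
Proof.
move=> hn; rewrite /HH; apply: ct_sc; last exact: cvg_id.
apply: ctS; exact: ct_ww.
Qed.

Lemma ct_fpp p : {for p, continuous (fpp beta k)}.
Proof.
have -> : fpp beta k = fun q => AA q + n2 q + k / 4 by apply: funext => q; rewrite fpp_AA.
apply: ctD; [apply: ctD; [exact: ct_AA|exact: ct_n2]|exact: ctC].
Qed.


Definition lin (a b : pt3 R) (t : R) : pt3 R :=
  ((a.1.1 * (1 - t) + b.1.1 * t, a.1.2 * (1 - t) + b.1.2 * t), a.2 * (1 - t) + b.2 * t).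

Lemma ct_lin a b t : {for t, continuous (lin a b)}.
Proof.
have ci : {for t, continuous (fun s : R => s)} by exact: cvg_id.
have c1 : {for t, continuous (fun s : R => 1 - s)} by apply: ctD; [exact: ctC| exact: ctN].
rewrite /lin; apply: ctP; apply: ctD; apply: ctM => //; exact: ctC.
Qed.

Lemma lin0 a b : lin a b 0 = a.
Proof. by case: a => [[x y] z]; rewrite /lin /= subr0 !mulr1 !mulr0 !addr0. Qed.
Lemma lin1 a b : lin a b 1 = b.
Proof. by case: b => [[x y] z]; rewrite /lin /= subrr !mulr1 !mulr0 !add0r. Qed.

Definition good (a q : pt3 R) :=
  Qpp beta k q /\ forall t, 0 <= t <= 1 -> 0 < n2 (lin a q t).

Definition arc (a q : pt3 R) := (fun t => HH (lin a q t)) @` `[0, 1].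

Lemma arc_connected a q : good a q -> connected (arc a q).
Proof.
move=> [_ hg]; apply: connected_continuous_connected; first exact: segment_connected.
apply: continuous_in_subspaceT => t; rewrite inE /= in_itv /= => ht.
exact: (continuous_comp (@ct_lin a q t) (ct_HH (hg t ht))).
Qed.

Lemma arc_sub a q : good a q -> arc a q `<=` Qpp beta k.
Proof.
move=> [_ hg] _ [t ht <-]; apply: HH_Q; apply: hg; move: ht; by rewrite /= in_itv.
Qed.

Lemma arc_a a q : Qpp beta k a -> arc a q a.
Proof. by move=> ha; exists 0; [rewrite /= in_itv /= lexx ler01| rewrite lin0 HH_fix]. Qed.

Lemma arc_q a q : Qpp beta k q -> arc a q q.
Proof. by move=> hq; exists 1; [rewrite /= in_itv /= lexx ler01| rewrite lin1 HH_fix]. Qed.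

Lemma n2_0 v : n2 v <= 0 -> [/\ v.1.1 = 0, v.1.2 = 0 & v.2 = 0].
Proof.
rewrite /n2 => h.
have h1 : v.1.1 ^+ 2 = 0 by apply/le_anti; rewrite sqr_ge0 andbT; nra.
have h2 : v.1.2 ^+ 2 = 0 by apply/le_anti; rewrite sqr_ge0 andbT; nra.
have h3 : v.2 ^+ 2 = 0 by apply/le_anti; rewrite sqr_ge0 andbT; nra.
by split; apply/eqP; rewrite -sqrf_eq0; apply/eqP.
Qed.


Lemma coord_bound (x M : R) : 0 < M -> x ^+ 2 <= M ^+ 2 -> -M <= x <= M.
Proof. move=> hM hx; apply/andP; split; nra. Qed.

Lemma AA_ge p : n2 p ^+ 2 <= AA p.
Proof. rewrite /AA lerDr; apply: mulr_ge0; [exact: ltW| exact: s4_ge0]. Qed.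

Lemma Q_bound p : Qpp beta k p -> n2 p <= (1 - k) ^+ 2.
Proof.
move=> hQ; have hn := Q_n2 hQ; have hA := AA_ge p.
move: hQ; rewrite /Qpp /= fpp_AA => e.
have h0 := sqr_ge0 (n2 p).
have h1 : n2 p <= - k / 4 by lra.
have h2 := sqr_ge0 k.
nra.
Qed.

Lemma coord_le p : [/\ p.1.1 ^+ 2 <= n2 p, p.1.2 ^+ 2 <= n2 p & p.2 ^+ 2 <= n2 p].
Proof.
have h1 := sqr_ge0 p.1.1; have h2 := sqr_ge0 p.1.2; have h3 := sqr_ge0 p.2.
rewrite /n2; split; lra.
Qed.

Lemma Q_compact : compact (Qpp beta k).
Proof.
have hM : 0 < 1 - k by rewrite subr_gt0 (lt_trans hk) ?ltr01.
have cQ : closed (Qpp beta k).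
  have := (continuous_closedP (fpp beta k)).1 (@ct_fpp) _ (@closed_eq R 0).
  by [].
apply: (subclosed_compact cQ (B := (`[-(1 - k), 1 - k] `*` `[-(1 - k), 1 - k]) `*` `[-(1 - k), 1 - k])).
  apply: compact_setX; [apply: compact_setX|]; exact: segment_compact.
move=> p hQ; have hb2 := Q_bound hQ.
have [hx hy hz] := coord_le p.
by split; [split|]; rewrite /= in_itv /=; apply: coord_bound => //; apply: le_trans hb2.
Qed.


Definition FF (p : pt3 R) := sc ((Num.sqrt (n2 p))^-1) p.

Lemma Q_homeo : homeomorphic_sets (Qpp beta k) (@sphere2 R).
Proof.
exists FF, HH; split; [|split; [|split; [|split; [|split]]]].
- move=> a ha; have hn := Q_n2 ha.
  rewrite /sphere2 /= -/(n2 (FF a)) /FF n2_sc exprVn sqr_sqrtr ?ltW //.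
  by rewrite mulVf // gt_eqF.
- by move=> b hbS; apply: HH_Q; rewrite /n2 hbS ltr01.
- move=> a ha; have hn := Q_n2 ha.
  rewrite /FF HH_sc ?HH_fix //; by rewrite invr_gt0 sqrtr_gt0.
- move=> b hbS; have hn : n2 b = 1 by [].
  have hw : 0 < ww b by apply: ww_gt0; rewrite hn ltr01.
  rewrite /FF /HH n2_sc hn mulr1 sqrtr_sqr ger0_norm ?sqrtr_ge0 //.
  have hc : 0 < Num.sqrt (ww b) by rewrite sqrtr_gt0.
  case: b hbS hn hw hc => [[x y] z] hbS hn hw hc; rewrite /sc /=.
  by congr (_, _, _); field; rewrite gt_eqF.
- apply: continuous_in_subspaceT => a; rewrite inE => ha; have hn := Q_n2 ha.
  rewrite /FF; apply: (@ct_sc _ a (fun p => (Num.sqrt (n2 p))^-1) (fun p => p)); last exact: cvg_id.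
  apply: ctV; first by rewrite gt_eqF // sqrtr_gt0.
  apply: ctS; exact: ct_n2.
- apply: continuous_in_subspaceT => b; rewrite inE => hbS.
  by apply: ct_HH; rewrite /n2 hbS ltr01.
Qed.


Lemma key (c t s q3 : R) : 0 < c -> 0 <= t <= 1 -> 0 <= s <= 1 ->
  c * (1 - t) + q3 * t = 0 -> - c * (1 - s) + q3 * s = 0 -> t = 1.
Proof.
move=> hc /andP[t0 t1] /andP[s0 s1] e1 e2.
have e : c * ((1 - t) * s + (1 - s) * t) = 0.
  have -> : c * ((1 - t) * s + (1 - s) * t) =
    s * (c * (1 - t) + q3 * t) - t * (- c * (1 - s) + q3 * s) by ring.
  by rewrite e1 e2 !mulr0 subrr.
move/eqP: e; rewrite mulf_eq0 (gt_eqF hc) /= => /eqP e.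
have a1 : 0 <= (1 - t) * s by apply: mulr_ge0 => //; rewrite subr_ge0.
have a2 : 0 <= (1 - s) * t by apply: mulr_ge0 => //; rewrite subr_ge0.
have b2 : (1 - s) * t = 0 by apply/le_anti; rewrite a2 andbT; lra.
have b1 : (1 - t) * s = 0 by apply/le_anti; rewrite a1 andbT; lra.
have tn0 : t != 0.
  apply/negP => /eqP t00; move: e1; rewrite t00 subr0 mulr1 mulr0 addr0 => c0.
  by move: hc; rewrite c0 ltxx.
move/eqP: b2; rewrite mulf_eq0 (negbTE tn0) orbF subr_eq0 => /eqP s1'.
move: b1; rewrite -s1' mulr1 => /eqP; rewrite subr_eq0 => /eqP <-. by [].
Qed.

Lemma pos2 (c d t : R) : 0 < c -> 0 < d -> 0 <= t <= 1 ->
  0 < (d * t) ^+ 2 + (c * (1 - t)) ^+ 2.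
Proof.
move=> hc hd /andP[t0 t1].
have [->|tn] := eqVneq t 0.
  by rewrite mulr0 expr0n add0r subr0 mulr1 exprn_gt0.
have h1 : 0 < (d * t) ^+ 2 by rewrite exprn_gt0 // mulr_gt0 // lt0r tn t0.
have h2 := sqr_ge0 (c * (1 - t)); lra.
Qed.

Definition e3 : pt3 R := ((0, 0), 1).
Definition e1 : pt3 R := ((1, 0), 0).

Lemma n2e3 : n2 e3 = 1. Proof. by rewrite /n2 /= expr0n expr1n !add0r. Qed.
Lemma n2e1 : n2 e1 = 1. Proof. by rewrite /n2 /= expr0n expr1n !addr0. Qed.

Lemma Q_connected : connected (Qpp beta k).
Proof.
set c := Num.sqrt (ww e3).
set d := Num.sqrt (ww e1).
have hc : 0 < c by rewrite sqrtr_gt0 ww_gt0 // n2e3 ltr01.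
have hd : 0 < d by rewrite sqrtr_gt0 ww_gt0 // n2e1 ltr01.
set P := HH e3. set N := sc (-1) P. set E := HH e1.
have QP : Qpp beta k P by apply: HH_Q; rewrite n2e3 ltr01.
have QN : Qpp beta k N by rewrite /Qpp /= fpp_neg.
have QE : Qpp beta k E by apply: HH_Q; rewrite n2e1 ltr01.
have gPE : good P E.
  split => // t ht; rewrite /lin /n2 /P /E /HH /sc /= -/c -/d.
  rewrite !mulr0 !mul0r !mulr1 !add0r !addr0 expr0n addr0.
  exact: pos2.
have gNE : good N E.
  split => // t ht; rewrite /lin /n2 /N /P /E /HH /sc /= -/c -/d.
  rewrite !mulr0 !mul0r !mulr1 !add0r !addr0 ?oppr0 ?mul0r ?expr0n ?addr0 ?mulN1r ?mulNr ?sqrrN.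
  exact: pos2.
have cover : forall q, Qpp beta k q -> good P q \/ good N q.
  move=> q hq.
  have [hP|hP] := pselect (forall t, 0 <= t <= 1 -> 0 < n2 (lin P q t)); first by left.
  have [hN|hN] := pselect (forall t, 0 <= t <= 1 -> 0 < n2 (lin N q t)); first by right.
  exfalso.
  move/existsNP: hP => [t /not_implyP [ht /negP]]; rewrite -leNgt => hnt.
  have [_ _ zt] := n2_0 hnt.
  move/existsNP: hN => [s /not_implyP [hs /negP]]; rewrite -leNgt => /n2_0 [_ _ zs].
  move: zt zs; rewrite /lin /N /P /HH /sc /= -/c mulr1 mulN1r => zt zs.
  have t1 := key hc ht hs zt zs.
  move: hnt; rewrite t1 lin1 => hnt.
  by have := Q_n2 hq; rewrite ltNge hnt.
have gP : forall q, good P q -> Qpp beta k q by move=> q [].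
pose A := \bigcup_(q in good P) arc P q.
pose B := \bigcup_(q in good N) arc N q.
have -> : Qpp beta k = A `|` B.
  apply/seteqP; split.
    move=> q hq; case: (cover q hq) => g; [left|right]; exists q => //; exact: arc_q.
  by move=> x [[q g hx]|[q g hx]]; exact: (arc_sub g hx).
apply: connectedU.
- exists E; split; [exists E => //| exists E => //]; exact: arc_q.
- apply: bigcup_connected; last by move=> q g; exact: arc_connected.
  by exists P => q g; exact: arc_a.
- apply: bigcup_connected; last by move=> q g; exact: arc_connected.
  by exists N => q g; exact: arc_a.
Qed.


Lemma main_sec :
  [/\ compact (Qpp beta k : set (R * R * R)%type),
      connected (Qpp beta k : set (R * R * R)%type)
    & homeomorphic_sets (Qpp beta k : set (R * R * R)%type)
                        (@sphere2 R : set (R * R * R)%type)].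
Proof. split; [exact: Q_compact| exact: Q_connected| exact: Q_homeo]. Qed.

End Alg.

Unset Implicit Arguments.
Unset Strict Implicit.

Theorem lemma1 (R : realType) (beta k : R) (hbeta : 0 < beta) (hk : k < 0) :
  [/\ compact (Qpp beta k : set (R * R * R)%type),
      connected (Qpp beta k : set (R * R * R)%type)
    & homeomorphic_sets (Qpp beta k : set (R * R * R)%type)
                        (@sphere2 R : set (R * R * R)%type)].
Proof. exact: (@main_sec R beta k hbeta hk). Qed.
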